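(* Let $\mathfrak g$ be a finite-dimensional simple Lie algebra over $\mathbb R$ or $\mathbb C$, and let $\mathfrak g=\mathfrak g_{\bar 0}\oplus\mathfrak g_{\bar 1}$ be a nontrivial $\mathbb Z_2$-grading (i.e. $[\mathfrak g_{\bar i},\mathfrak g_{\bar j}]\subseteq\mathfrak g_{\overline{i+j}}$ and $\mathfrak g_{\bar 1}\neq 0$). Then $\mathfrak g_{\bar 1}$ is a maximal Lie triple subsystem of $\mathfrak g$.
   Context: A Lie algebra $\mathfrak g$ is regarded as a Lie triple system with triple product $[x,y,z]:=[[x,y],z]$. A Lie triple subsystem of $\mathfrak g$ is a vector subspace $T$ with $[[T,T],T]\subseteq T$. A maximal Lie triple subsystem is a proper Lie triple subsystem not properly contained in any other proper Lie triple subsystem. *)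

(* Defs.v *)
From HB Require Import structures.
From mathcomp Require Import all_boot all_order all_algebra complex.
From mathcomp Require Import Rstruct.
Set Implicit Arguments. Unset Strict Implicit. Unset Printing Implicit Defensive.
Import GRing.Theory.
Local Open Scope ring_scope.

Section Lie.
Variables (K : fieldType) (V : vectType K).

Definition is_lie_bracket (br : V -> V -> V) : Prop :=
  [/\ (forall (a : K) (x y z : V), br (a *: x + y) z = a *: br x z + br y z),
      (forall (a : K) (x y z : V), br x (a *: y + z) = a *: br x y + br x z),
      (forall x : V, br x x = 0) &
      (forall x y z : V, br x (br y z) + br y (br z x) + br z (br x y) = 0)].

Definition lie_ideal (br : V -> V -> V) (I : {vspace V}) : Prop :=
  forall x y : V, y \in I -> br x y \in I.

Definition simple_lie (br : V -> V -> V) : Prop :=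
  (exists x y : V, br x y != 0) /\
  (forall I : {vspace V}, lie_ideal br I -> I = 0%VS \/ I = fullv).

(* g false = g_0bar, g true = g_1bar; V = g_0 (+) g_1 and [g_i, g_j] in g_(i+j). *)
Definition Z2_grading (br : V -> V -> V) (g : bool -> {vspace V}) : Prop :=
  [/\ directv (g false + g true)%VS,
      (g false + g true)%VS = fullv &
      (forall (i j : bool) (x y : V), x \in g i -> y \in g j -> br x y \in g (i (+) j))].

Definition lie_triple_subsystem (br : V -> V -> V) (T : {vspace V}) : Prop :=
  forall x y z : V, x \in T -> y \in T -> z \in T -> br (br x y) z \in T.

Definition maximal_lts (br : V -> V -> V) (T : {vspace V}) : Prop :=
  [/\ T != fullv, lie_triple_subsystem br T &
      forall T' : {vspace V}, lie_triple_subsystem br T' -> T' != fullv ->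
        (T <= T')%VS -> T' = T].

End Lie.

(* Main.v *)
Require Import Defs.
From HB Require Import structures.
From mathcomp Require Import all_boot all_order all_algebra complex.
From mathcomp Require Import Rstruct zify.
From Stdlib Require Import Classical.
Set Implicit Arguments. Unset Strict Implicit. Unset Printing Implicit Defensive.
Import GRing.Theory.
Local Open Scope ring_scope.

Lemma br_lin (K : fieldType) (V : vectType K) (br : V -> V -> V) : is_lie_bracket br ->
  [/\ (forall x y z, br (x + y) z = br x z + br y z),
      (forall x y z, br x (y + z) = br x y + br x z),
      (forall a x z, br (a *: x) z = a *: br x z),
      (forall a x z, br z (a *: x) = a *: br z x) &
      (forall x y, br x y = - br y x)].
Proof.
case=> H1 H2 H3 H4.
have D1 : forall x y z, br (x + y) z = br x z + br y z.
  by move=> x y z; have := H1 1 x y z; rewrite !scale1r.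
have D2 : forall x y z, br x (y + z) = br x y + br x z.
  by move=> x y z; have := H2 1 x y z; rewrite !scale1r.
have Z1 : forall z, br 0 z = 0.
  move=> z; have := D1 0 0 z; rewrite addr0 -{1}[br 0 z]addr0 => /addrI; done.
have Z2 : forall z, br z 0 = 0.
  move=> z; have := D2 z 0 0; rewrite addr0 -{1}[br z 0]addr0 => /addrI; done.
split=> //.
- by move=> a x z; have := H1 a x 0 z; rewrite addr0 Z1 addr0.
- by move=> a x z; have := H2 a z x 0; rewrite addr0 Z2 addr0.
- move=> x y; have := H3 (x + y); rewrite D1 !D2 !H3 add0r addr0 => /eqP.
  by rewrite addr_eq0 => /eqP.
Qed.

Lemma br_jac (K : fieldType) (V : vectType K) (br : V -> V -> V) : is_lie_bracket br ->
  forall a b c, br (br a b) c = br a (br b c) + br b (br c a).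
Proof.
move=> HL; have [_ _ _ _ AS] := br_lin HL; case: HL => _ _ _ J a b c.
have /eqP := J a b c; rewrite addr_eq0 => /eqP ->.
by rewrite AS.
Qed.

Inductive BRs (K : fieldType) (V : vectType K) (br : V -> V -> V) (S : {vspace V}) : V -> Prop :=
| BR0 : BRs br S 0
| BRS x y c : x \in S -> y \in S -> BRs br S c -> BRs br S (br x y + c).
Lemma vspace_of_pred (K : fieldType) (V : vectType K) (P : V -> Prop) :
  P 0 -> (forall a u v, P u -> P v -> P (a *: u + v)) ->
  exists U : {vspace V}, forall v, v \in U <-> P v.
Proof.
move=> P0 PC.
suff H : forall k (U : {vspace V}), (\dim (@fullv K V) - \dim U <= k)%N ->
   (forall v, v \in U -> P v) -> exists U' : {vspace V}, forall v, v \in U' <-> P v.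
  apply: (H _ 0%VS (leqnn _)) => v; rewrite memv0 => /eqP ->; exact: P0.
elim=> [|k IH] U hk hU.
- case: (classic (forall v, P v -> v \in U)) => [hall|hn].
    by exists U => v; split; [apply: hU|apply: hall].
  have [v hv] := not_all_ex_not _ _ hn; have [Pv nv] := imply_to_and _ _ hv.
  have sU : (U <= U + <[v]>)%VS by apply: addvSl.
  have [le1 E] := dimv_leqif_sup sU.
  have F : (U + <[v]> <= U)%VS = false.
    apply/negP => /subvP s; apply: nv; apply: s; by have := memv_add (mem0v U) (memv_line v); rewrite add0r.
  rewrite F in E; move/eqP: E le1 => E le1.
  have := dimvS (subvf (U + <[v]>)%VS); move: hk. lia.
- case: (classic (forall v, P v -> v \in U)) => [hall|hn].
    by exists U => v; split; [apply: hU|apply: hall].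
  have [v hv] := not_all_ex_not _ _ hn; have [Pv nv] := imply_to_and _ _ hv.
  have sU : (U <= U + <[v]>)%VS by apply: addvSl.
  have [le1 E] := dimv_leqif_sup sU.
  have F : (U + <[v]> <= U)%VS = false.
    apply/negP => /subvP s; apply: nv; apply: s; by have := memv_add (mem0v U) (memv_line v); rewrite add0r.
  rewrite F in E; move/eqP: E le1 => E le1.
  apply: (IH (U + <[v]>)%VS).
    have := dimvS (subvf (U + <[v]>)%VS); move: hk. lia.
  move=> w /memv_addP [u hu [x /vlineP [c ->] ->]].
  rewrite addrC; apply: PC => //; exact: hU.
Qed.

Lemma BR_add (K : fieldType) (V : vectType K) (br : V -> V -> V) S u v :
  BRs br S u -> BRs br S v -> BRs br S (u + v).
Proof.
elim=> [|x y c hx hy _ IH] hv; first by rewrite add0r.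
by rewrite -addrA; apply: BRS => //; apply: IH.
Qed.

Lemma BR_scale (K : fieldType) (V : vectType K) (br : V -> V -> V) S a v :
  is_lie_bracket br -> BRs br S v -> BRs br S (a *: v).
Proof.
move=> HL; have [_ _ Z1 _ _] := br_lin HL.
elim=> [|x y c hx hy _ IH]; first by rewrite scaler0; apply: BR0.
by rewrite scalerDr -Z1; apply: BRS => //; apply: memvZ.
Qed.

Lemma main_gen (K : fieldType) (V : vectType K) (br : V -> V -> V) (g : bool -> {vspace V}) :
  is_lie_bracket br -> simple_lie br -> Z2_grading br g -> g true != 0%VS ->
  maximal_lts br (g true).
Proof.
move=> HL [[xa [ya nz0]] Hsimp] [Hdir Hfull Hgr] Hg1.
have [D1 D2 Z1 Z2 AS] := br_lin HL.
have Bl0 : forall z, br 0 z = 0 by move=> z; have := Z1 0 0 z; rewrite !scale0r.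
have Br0 : forall z, br z 0 = 0 by move=> z; have := Z2 0 0 z; rewrite !scale0r.
have Hcap : (g false :&: g true = 0)%VS by apply/directv_addP.
have decomp : forall v, exists2 v0, v0 \in g false & exists2 v1, v1 \in g true & v = v0 + v1.
  by move=> v; apply/memv_addP; rewrite Hfull memvf.
have uniq : forall a b c d, a \in g false -> b \in g true -> c \in g false -> d \in g true ->
    a + b = c + d -> a = c /\ b = d.
  move=> a b c d ha hb hc hd E.
  have E2 : a - c = d - b.
    by apply/eqP; rewrite subr_eq -addrA (addrC (-b)) addrA (addrC d) -E addrK.
  have : a - c \in (g false :&: g true)%VS.
    by rewrite memv_cap memvB //= E2 memvB.
  rewrite Hcap memv0 subr_eq0 => /eqP ac; split=> //.
  by move: E2; rewrite ac subrr => /eqP; rewrite eq_sym subr_eq0 eq_sym => /eqP.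
have g1LTS : lie_triple_subsystem br (g true).
  by move=> x y z hx hy hz; exact: (Hgr false true _ _ (Hgr true true _ _ hx hy) hz).
split=> //.
  apply/negP => /eqP E.
  have : br xa ya \in (g false :&: g true)%VS.
    by rewrite memv_cap E memvf andbT; apply: (Hgr true true); rewrite E memvf.
  by rewrite Hcap memv0 (negbTE nz0).
move=> T HT HTf Hsub.
have [v1 v1g1 v1nz] : exists2 v, v \in g true & v != 0.
  by exists (vpick (g true)); [apply: memv_pick | rewrite vpick0].
(* Step A: g0 is spanned by brackets of g1 *)
have deriv : forall z x y, br z (br x y) = br (br z x) y + br x (br z y).
  move=> z x y; rewrite (br_jac HL z x y) [br z y]AS -scaleN1r Z2 scaleN1r.
  by rewrite addrK.
have BRg0 : forall z v, z \in g false -> BRs br (g true) v -> BRs br (g true) (br z v).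
  move=> z v hz; elim=> [|x y c hx hy _ IH]; first by rewrite Br0; apply: BR0.
  rewrite D2 deriv -addrA; apply: BRS.
  - by apply: (Hgr false true).
  - by [].
  rewrite -[br x (br z y)]addr0; apply: BR_add; last exact: IH.
  by apply: BRS => //; [apply: (Hgr false true) | apply: BR0].
have stepA : forall c, c \in g false -> BRs br (g true) c.
  pose P v := exists v0 v1, [/\ v0 \in g false, v1 \in g true, v = v0 + v1 & BRs br (g true) v0].
  have [J HJ] : exists J : {vspace V}, forall v, v \in J <-> P v.
    apply: vspace_of_pred.
      by exists 0, 0; split; rewrite ?mem0v ?addr0 //; apply: BR0.
    move=> a u v [u0 [u1 [hu0 hu1 Eu Bu]]] [w0 [w1 [hw0 hw1 Ew Bw]]].
    exists (a *: u0 + w0), (a *: u1 + w1); split.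
    - by rewrite memvD ?memvZ.
    - by rewrite memvD ?memvZ.
    - by rewrite Eu Ew scalerDr addrACA.
    - by apply: BR_add => //; apply: BR_scale.
  have Jid : lie_ideal br J.
    move=> x y /HJ [y0 [y1 [hy0 hy1 Ey By]]]; apply/HJ.
    have [x0' hx0 [x1' hx1 Ex]] := decomp x.
    exists (br x0' y0 + br x1' y1), (br x0' y1 + br x1' y0); split.
    - by rewrite memvD //; [apply: (Hgr false false) | apply: (Hgr true true)].
    - by rewrite memvD //; [apply: (Hgr false true) | apply: (Hgr true false)].
    - by rewrite Ex Ey !D1 !D2 [RHS]addrACA [br x1' y1 + _]addrC.
    - apply: BR_add; first exact: BRg0.
      by rewrite -[br x1' y1]addr0; apply: BRS => //; apply: BR0.
  case: (Hsimp J Jid) => EJ.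
    have : v1 \in J by apply/HJ; exists 0, v1; split; rewrite ?mem0v ?add0r //; apply: BR0.
    by rewrite EJ memv0 (negbTE v1nz).
  move=> c hc; have : c \in J by rewrite EJ memvf.
  move=> /HJ [c0 [c1 [hc0 hc1 Ec Bc]]].
  have [-> _] := uniq c 0 c0 c1 hc (mem0v _) hc0 hc1 (etrans (addr0 c) Ec).
  exact: Bc.
have norm : forall c a, c \in g false -> a \in T -> a \in g false -> br c a \in T.
  move=> c a hc haT ha0; elim: (stepA c hc) => [|x y c' hx hy _ IH]; first by rewrite Bl0 mem0v.
  rewrite D1 memvD //; apply: HT => //; apply: (subvP Hsub) => //.
pose P v := exists v0 v1, [/\ v0 \in g false, v1 \in g true, v = v0 + v1, v0 \in T &
   forall y, y \in g true -> br v1 y \in T].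
have [I HI] : exists I : {vspace V}, forall v, v \in I <-> P v.
  apply: vspace_of_pred.
    by exists 0, 0; split; rewrite ?mem0v ?addr0 // => y _; rewrite Bl0 mem0v.
  move=> a u v [u0 [u1 [hu0 hu1 Eu Tu Bu]]] [w0 [w1 [hw0 hw1 Ew Tw Bw]]].
  exists (a *: u0 + w0), (a *: u1 + w1); split.
  - by rewrite memvD ?memvZ.
  - by rewrite memvD ?memvZ.
  - by rewrite Eu Ew scalerDr addrACA.
  - by rewrite memvD ?memvZ.
  - by move=> y hy; rewrite D1 Z1 memvD ?memvZ ?Bu ?Bw.
have Iid : lie_ideal br I.
  move=> x y /HI [y0 [y1 [hy0 hy1 Ey Ty By]]]; apply/HI.
  have [x0' hx0 [x1' hx1 Ex]] := decomp x.
  exists (br x0' y0 + br x1' y1), (br x0' y1 + br x1' y0); split.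
  - by rewrite memvD //; [apply: (Hgr false false) | apply: (Hgr true true)].
  - by rewrite memvD //; [apply: (Hgr false true) | apply: (Hgr true false)].
  - by rewrite Ex Ey !D1 !D2 [RHS]addrACA [br x1' y1 + _]addrC.
  - apply: memvD; first exact: norm.
    by rewrite AS memvN; apply: By.
  - move=> z hz; rewrite D1 memvD //.
      rewrite br_jac // memvD //.
        apply: norm => //; first exact: By.
        by apply: (Hgr true true).
      by apply: By; apply: (Hgr true false).
    by apply: HT => //; apply: (subvP Hsub).
case: (Hsimp I Iid) => EI.
  apply/eqP; rewrite eqEsubv Hsub andbT; apply/subvP => t Ht.
  have [t0 ht0 [t1 ht1 Et]] := decomp t.
  have t0T : t0 \in T.
    have -> : t0 = t - t1 by rewrite Et addrK.
    by rewrite memvB //; apply: (subvP Hsub).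
  have : t0 \in I.
    by apply/HI; exists t0, 0; split; rewrite ?mem0v ?addr0 // => y _; rewrite Bl0 mem0v.
  by rewrite EI memv0 Et => /eqP ->; rewrite add0r.
exfalso; move/negP: HTf; apply; rewrite eqEsubv subvf /=.
apply/subvP => v _; have : v \in I by rewrite EI memvf.
move=> /HI [v0 [v1' [hv0 hv1 Ev Tv _]]].
by rewrite Ev memvD //; apply: (subvP Hsub).
Qed.

Theorem mainTheorem4 :
  (forall (V : vectType Rdefinitions.R) (br : V -> V -> V) (g : bool -> {vspace V}),
     is_lie_bracket br -> simple_lie br -> Z2_grading br g -> g true != 0%VS ->
     maximal_lts br (g true))
  /\
  (forall (V : vectType (Rdefinitions.R)[i]) (br : V -> V -> V) (g : bool -> {vspace V}),
     is_lie_bracket br -> simple_lie br -> Z2_grading br g -> g true != 0%VS ->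
     maximal_lts br (g true)).
Proof. by split=> V br g; apply: main_gen. Qed.
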